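(* For all integers $n\ge 2$ and $1\le k<n$, the graph $H_B(n,k)$ is connected and its circuit rank (cyclomatic number $|E|-|V|+1$) equals $$\binom{n}{k}\left(\sum_{s=1}^{k}2^{s-1}\binom{k}{s}-1+\sum_{t=1}^{n-k}2^{k+t-1}\binom{n-k}{t}\right)-\sum_{i=1}^n 2^{i-1}\binom{n}{i}+1.$$
   Context: Fix integers $n\ge 2$ and $1\le k<n$ and positive real numbers $x_1<x_2<\dots<x_n$. Let $\mathscr{B}_n=\{\pm x_1,\pm x_2,\dots,\pm x_{n-1},x_n\}$ (so $-x_n\notin\mathscr{B}_n$). Let $\phi(\mathscr{B}_n)$ be the family of all nonempty subsets $S\subseteq\mathscr{B}_n$ whose elements have pairwise distinct absolute values and whose element of largest absolute value is positive. Let $\mathscr{B}_n^+=\{x_1,\dots,x_n\}$, let $V_1$ be the set of all $k$-element subsets of $\mathscr{B}_n^+$, and let $V_2=\phi(\mathscr{B}_n)\setminus V_1$. For $A\in\phi(\mathscr{B}_n)$ put $A^\dagger=\{|a|:a\in A\}$. The bipartite Kneser B type-$k$ graph $H_B(n,k)$ is the simple graph with vertex set $V_1\cup V_2$ in which $X\in V_1$ and $Y\in V_2$ are adjacent if and only if $X\subseteq Y^\dagger$ or $Y^\dagger\subseteq X$, and there are no other edges. *)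

(* Defs.v *)
From mathcomp Require Import all_boot all_order all_algebra.
Set Implicit Arguments. Unset Strict Implicit. Unset Printing Implicit Defensive.
Import GRing.Theory Num.Theory.

(* Encoding: the signed element (i, b) : 'I_n * bool stands for
   +x_(i+1) if b = true and -x_(i+1) if b = false.  Since
   0 < x_1 < ... < x_n, the absolute value of (i,b) is x_(i+1), and
   comparing absolute values amounts to comparing indices i. *)
Definition sgnelt (n : nat) := ('I_n * bool)%type.

Definition inBn (n : nat) (a : sgnelt n) : bool := (val a.1 != n.-1) || a.2.

Definition inBnplus (n : nat) (a : sgnelt n) : bool := a.2.

Definition absv (n : nat) (a : sgnelt n) : 'I_n := a.1.

Definition inPhi (n : nat) (S : {set sgnelt n}) : bool :=
  [&& S \subset [set a | inBn a], S != set0,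
      [forall a in S, forall b in S, (absv a == absv b) ==> (a == b)] &
      [forall a in S, [forall b in S, absv b <= absv a] ==> inBnplus a]].

Definition dagger (n : nat) (S : {set sgnelt n}) : {set 'I_n} := [set absv a | a in S].

Definition inV1 (n k : nat) (S : {set sgnelt n}) : bool :=
  (S \subset [set a | inBnplus a]) && (#|S| == k).

Definition inV2 (n k : nat) (S : {set sgnelt n}) : bool :=
  inPhi S && ~~ inV1 k S.

Definition HB_vert (n k : nat) : {set {set sgnelt n}} :=
  [set S | inV1 k S || inV2 k S].

(* adjacency of H_B(n,k): X in V1, Y in V2 with X ⊆ Y^† or Y^† ⊆ X
   (X viewed as a set of positive numbers, i.e. via X^† = X) *)
Definition HB_adj1 (n k : nat) (X Y : {set sgnelt n}) : bool :=
  [&& inV1 k X, inV2 k Y &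
      (dagger X \subset dagger Y) || (dagger Y \subset dagger X)].

Definition HB_adj (n k : nat) : rel {set sgnelt n} :=
  fun X Y => HB_adj1 k X Y || HB_adj1 k Y X.

Definition HB_edges (n k : nat) : {set {set {set sgnelt n}}} :=
  [set e | [exists X, exists Y, [&& X \in HB_vert n k, Y \in HB_vert n k,
            HB_adj k X Y & e == [set X; Y]]]].

Definition graph_connected (T : finType) (V : {set T}) (e : rel T) : Prop :=
  forall u v, u \in V -> v \in V ->
    connect [rel x y | [&& x \in V, y \in V & e x y]] u v.

Definition HB_circuit_rank (n k : nat) : int :=
  (#|HB_edges n k|%:Z - #|HB_vert n k|%:Z + 1)%R.

(* Main.v *)
Require Import Defs.
From mathcomp Require Import all_boot all_order all_algebra.
From mathcomp Require Import zify ring.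
Import GRing.Theory Num.Theory.
Lemma sum_subsets (T : finType) (B : {set T}) (h : nat -> nat) :
  \sum_(A : {set T} | A \subset B) h #|A| = \sum_(s < #|B|.+1) 'C(#|B|, s) * h s.
Proof.
transitivity (\sum_(A : {set T} | A \subset B) \sum_(s < #|B|.+1) (#|A| == s) * h s).
  apply: eq_bigr => A sAB.
  have lt : #|A| < #|B|.+1 by rewrite ltnS subset_leq_card.
  rewrite (bigD1 (Ordinal lt)) //= eqxx mul1n big1 ?addn0 // => s ne.
  case: eqP => [E|]; last by rewrite mul0n.
  by case/eqP: ne; apply: val_inj; rewrite /= E.
rewrite exchange_big; apply: eq_bigr => s _.
rewrite (eq_bigr (fun A : {set T} => if #|A| == s then h s else 0)); last first.
  by move=> A _; case: (_ == _); rewrite ?mul1n ?mul0n.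
rewrite -big_mkcondr /= sum_nat_const -(cards_draws B s) cardsE.
by [].
Qed.

Lemma sum_supsets (T : finType) (D : {set T}) (g : nat -> nat) :
  \sum_(A : {set T} | D \proper A) g #|A| =
  \sum_(C : {set T} | C \subset ~: D) (if C != set0 then g (#|D| + #|C|) else 0).
Proof.
rewrite -big_mkcondr /=.
rewrite (reindex_onto (fun C => C :|: D) (fun A => A :\: D)); last first.
  move=> A /proper_sub /subsetP sDA; apply/setP => x; rewrite !inE.
  by case xD: (x \in D); rewrite /= ?andbT ?orbF ?orbT //; rewrite sDA.
apply: eq_big => C.
  apply/idP/idP.
    case/andP => pr /eqP E; apply/andP; split.
      by rewrite -E; apply/subsetP => x; rewrite !inE; case/andP => ->.
    apply/negP => /eqP C0; move: pr; by rewrite C0 set0U properE subxx andbF.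
  case/andP => sCD /set0Pn [x xC]; apply/andP; split.
    rewrite properE subsetUr /=; apply/negP => /subsetP H.
    have := H x; rewrite inE xC /= => /(_ isT) xD.
    by have := subsetP sCD x xC; rewrite inE xD.
  apply/eqP/setP => y; rewrite !inE.
  case yC: (y \in C); case yD: (y \in D) => //=.
  by have := subsetP sCD y yC; rewrite inE yD.
case/andP => _ /eqP E.
congr g; rewrite cardsU addnC.
suff -> : C :&: D = set0 by rewrite cards0 subn0.
apply/setP => y; rewrite !inE; apply/negP => /andP [yC yD].
have : y \in (C :|: D) :\: D by rewrite E.
by rewrite !inE yD.
Qed.

Lemma foldr_prod (s : seq nat) : foldr muln 1 s = \prod_(x <- s) x.
Proof. by elim: s => [|a s IH]; rewrite ?big_nil ?big_cons //= IH. Qed.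

Lemma fiber (n : nat) (A : {set 'I_n}) (m : 'I_n) :
  m \in A -> (forall i, i \in A -> i <= m) ->
  #|[set S : {set sgnelt n} | inPhi S & dagger S == A]| = 2 ^ (#|A| - 1).
Proof.
move=> mA mmax.
pose F := pfamily false A (fun i : 'I_n => if i == m then pred1 true else predT).
pose g (f : {ffun 'I_n -> bool}) : {set sgnelt n} := [set (i, f i) | i in A].
have cF : #|F| = 2 ^ (#|A| - 1).
  rewrite card_pfamily foldr_prod big_map big_enum /=.
  rewrite (bigD1 m) //= eqxx.
  rewrite (eq_bigr (fun _ => 2)); last first.
    move=> i /andP [_ /negbTE ->]; by rewrite -card_bool; apply: eq_card.
  rewrite prod_nat_const (cardD1 m A) mA add1n subn1 /=.
  rewrite (_ : #|eq_op^~ true| = 1) ?mul1n.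
    by congr (2 ^ _); apply: eq_card => i; rewrite !inE andbC.
  by rewrite -(card1 true); apply: eq_card.
have ginj : {in F &, injective g}.
  move=> f1 f2 /pfamilyP [/supportP s1 _] /pfamilyP [/supportP s2 _] E.
  apply/ffunP => i; case iA: (i \in A); last by rewrite s1 ?iA // s2 ?iA.
  have : (i, f1 i) \in g f2 by rewrite -E; apply/imsetP; exists i.
  by case/imsetP => j _ [-> ->].
rewrite -cF -(card_in_imset ginj); apply: eq_card => S; rewrite inE.
apply/idP/idP.
  case/andP => /and4P [sB S0 /forallP dist /forallP maxp] /eqP dS.
  have distP : forall a b, a \in S -> b \in S -> absv a = absv b -> a = b.
    move=> a b aS bS E; have := dist a; rewrite aS /= => /forallP /(_ b).
    by rewrite bS E eqxx /= => /eqP.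
  have inA : forall a, a \in S -> a.1 \in A.
    by move=> a aS; rewrite -dS; apply/imsetP; exists a.
  have inS : forall i, i \in A -> exists b, b \in S /\ b.1 = i.
    by move=> i; rewrite -dS => /imsetP [b bS ->]; exists b.
  pose f := [ffun i => (i, true) \in S].
  apply/imsetP; exists f.
    apply/pfamilyP; split.
      apply/supportP => i iA; rewrite ffunE; apply/negbTE/negP => iS.
      by move: iA; rewrite (inA _ iS).
    move=> i iA; case: eqP => [->|_] //.
    rewrite inE ffunE.
    have [a [aS am]] := inS m mA.
    have := maxp a; rewrite aS /= => /implyP H.
    have : inBnplus a.
      apply: H; apply/forallP => b; apply/implyP => bS.
      by rewrite /absv am mmax // inA.
    move=> bt; suff E : a = (m, true) by rewrite -E aS.
    by move: am bt {H aS}; case: a => j b /= -> ->.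
  apply/setP => a; apply/idP/imsetP.
    move=> aS; exists a.1; first exact: inA.
    rewrite ffunE; case: a aS => i [] aS /=; first by rewrite aS.
    case E: ((i, true) \in S) => //.
    by have := distP _ _ aS E erefl.
  case => i iA ->; rewrite ffunE.
  case E: ((i, true) \in S) => //.
  have [[j b] [bS /= ji]] := inS i iA.
  move: bS; rewrite ji; case: b => //; by rewrite E.
case/imsetP => f fF ->; move/pfamilyP: fF => [/supportP sf ff].
have fm : f m = true by have := ff m mA; rewrite eqxx inE => /eqP.
have mg : (m, f m) \in g f by apply/imsetP; exists m.
apply/andP; split; last first.
  apply/eqP/setP => i; apply/imsetP/idP.
    by case => a /imsetP [j jA ->] ->.
  by move=> iA; exists (i, f i) => //; apply/imsetP; exists i.
apply/and4P; split.
- apply/subsetP => a /imsetP [j jA ->]; rewrite inE /inBn /=.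
  case: eqP => //= E.
  have jm : j = m.
    apply/val_inj/eqP; rewrite eqn_leq mmax //=.
    have := ltn_ord m; rewrite E; lia.
  by rewrite jm fm.
- by apply/set0Pn; exists (m, f m).
- apply/forallP => a; apply/implyP => /imsetP [i iA ->].
  apply/forallP => b; apply/implyP => /imsetP [j jA ->].
  by apply/implyP; rewrite /absv /= => /eqP ->.
- apply/forallP => a; apply/implyP => /imsetP [i iA ->].
  apply/implyP => /forallP H.
  have := H (m, f m); rewrite mg /= /absv /= => hm.
  have im : i = m by apply/val_inj/eqP; rewrite eqn_leq mmax.
  by rewrite /inBnplus /= im fm.
Qed.

Definition w (i : nat) : nat := if i != 0 then 2 ^ (i - 1) else 0.

Lemma phi_count (n : nat) (P : pred {set 'I_n}) :
  #|[set S : {set sgnelt n} | inPhi S & P (dagger S)]| = \sum_(A | P A) w #|A|.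
Proof.
rewrite -sum1_card (partition_big (@dagger n) P); last first.
  by move=> S; rewrite inE => /andP [].
apply: eq_bigr => A PA.
rewrite (eq_bigl (fun S => inPhi S && (dagger S == A))); last first.
  move=> S; rewrite inE; case: eqP => [->|]; by rewrite ?PA ?andbT ?andbF.
rewrite sum1_card.
case: (boolP (A == set0)) => [/eqP A0 | /set0Pn [i0 i0A]].
  rewrite /w A0 cards0 /=.
  apply: eq_card0 => S; apply/negP => /andP [/and4P [_ /set0Pn [a aS] _ _] /eqP dA].
  have : a.1 \in set0 by rewrite -dA; apply/imsetP; exists a.
  by rewrite inE.
case: (arg_maxnP (fun i : 'I_n => nat_of_ord i) i0A) => m mA mmax.
rewrite /w; case: (#|A| =P 0) => [/eqP|_].
  by rewrite cards_eq0 => /eqP A0; move: i0A; rewrite A0 inE.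
rewrite /= -(@fiber n A m mA mmax); by apply: eq_card => S; rewrite inE.
Qed.

Section Main.
Variables (n k : nat).
Hypothesis (hk : 0 < k).

Definition Pos : {set sgnelt n} := [set a | inBnplus a].

Lemma pos_inj (X : {set sgnelt n}) : X \subset Pos -> {in X &, injective (@absv n)}.
Proof.
move/subsetP=> sX [i b] [j c] /sX; rewrite inE /inBnplus /= => bt /sX.
rewrite inE /inBnplus /= => ct; rewrite /absv /= => ij.
by move: bt ct; case: b; case: c => // _ _; rewrite ij.
Qed.

Lemma dagger_card (X : {set sgnelt n}) : X \subset Pos -> #|dagger X| = #|X|.
Proof. by move=> sX; rewrite /dagger card_in_imset //; apply: (@pos_inj X). Qed.

Lemma pos_dagger_eq (X Y : {set sgnelt n}) : X \subset Pos -> Y \subset Pos ->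
  dagger X = dagger Y -> X = Y.
Proof.
move=> /subsetP sX /subsetP sY E.
have key : forall X Y : {set sgnelt n}, (forall a, a \in X -> a \in Pos) ->
    (forall a, a \in Y -> a \in Pos) -> dagger X = dagger Y -> X \subset Y.
  move=> X1 Y1 s1 s2 E1; apply/subsetP => a aX.
  have : a.1 \in dagger Y1 by rewrite -E1; apply/imsetP; exists a.
  case/imsetP => b bY ab.
  have := s1 a aX; have := s2 b bY; rewrite !inE /inBnplus.
  move: ab bY; rewrite /absv; case: a {aX} => i x; case: b => j y /= -> bY'.
  by move: bY'; case: x; case: y.
by apply/eqP; rewrite eqEsubset !key.
Qed.

Lemma V1_phi (X : {set sgnelt n}) : inV1 k X -> inPhi X.
Proof.
case/andP => sX /eqP cX.
have sX' := subsetP sX.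
apply/and4P; split.
- by apply/subsetP => a /sX'; rewrite !inE /inBn /inBnplus => ->; rewrite orbT.
- by rewrite -card_gt0 cX.
- apply/forallP => a; apply/implyP => aX; apply/forallP => b; apply/implyP => bX.
  by apply/implyP => /eqP E; apply/eqP; exact: (@pos_inj X sX a b aX bX E).
- apply/forallP => a; apply/implyP => /sX'; rewrite inE => ->.
  by rewrite implybT.
Qed.

Lemma vert_eq : HB_vert n k = [set S : {set sgnelt n} | inPhi S].
Proof.
apply/setP => S; rewrite !inE /inV2.
by case V: (inV1 k S); rewrite /= ?andbT // (@V1_phi S V).
Qed.


Definition PX (X : {set sgnelt n}) : pred {set 'I_n} :=
  fun A => (dagger X \subset A) || (A \subset dagger X).

Lemma adj_count X : inV1 k X ->
  #|[set Y | HB_adj1 k X Y]| = #|[set Y | inPhi Y & PX X (dagger Y)]| - 1.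
Proof.
move=> V1X.
have -> : [set Y | inPhi Y & PX X (dagger Y)] = X |: [set Y | HB_adj1 k X Y].
  apply/setP => Y; rewrite !inE /HB_adj1 V1X /inV2 /PX /=.
  case: (Y =P X) => [->|neq] /=; first by rewrite (@V1_phi X V1X) subxx.
  case PY: (inPhi Y) => //=.
  case V1Y: (inV1 k Y) => //=.
  apply/negP => c; apply: neq.
  move: V1X V1Y => /andP [sX /eqP cX] /andP [sY /eqP cY].
  apply: pos_dagger_eq => //.
  case/orP: c => s; apply/eqP.
    by rewrite eq_sym eqEcard s (@dagger_card X sX) (@dagger_card Y sY) cX cY leqnn.
  by rewrite eqEcard s (@dagger_card X sX) (@dagger_card Y sY) cX cY leqnn.
rewrite cardsU1 inE /HB_adj1 /inV2 V1X /= andbF /=.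
by rewrite add1n subn1.
Qed.


Lemma sum_PX X : inV1 k X -> \sum_(A | PX X A) w #|A| =
  \sum_(s < k.+1) 'C(k, s) * w s +
  \sum_(t < (n - k).+1) 'C(n - k, t) * (if (t : nat) != 0 then w (k + t) else 0).
Proof.
move=> V1X; set D := dagger X.
have cD : #|D| = k by case/andP: V1X => sX /eqP <-; exact: (@dagger_card X sX).
rewrite (bigID (fun A : {set 'I_n} => A \subset D)) /=.
congr (_ + _).
  rewrite -cD -sum_subsets; apply: eq_bigl => A.
  by rewrite /PX; case: (A \subset D); rewrite ?orbT ?andbF.
rewrite (eq_bigl (fun A : {set 'I_n} => D \proper A)); last first.
  by move=> A; rewrite /PX properE; case: (A \subset D); rewrite /= ?orbF ?andbF ?andbT.
rewrite sum_supsets.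
rewrite (eq_bigr (fun C : {set 'I_n} => (fun t => if t != 0 then w (k + t) else 0) #|C|)); last first.
  by move=> C _; rewrite cards_eq0 cD.
have cC : #|~: D| = n - k.
  have E := cardsC D; rewrite cD [X in _ = X]card_ord in E; lia.
by have := @sum_subsets _ (~: D) (fun t => if t != 0 then w (k + t) else 0); rewrite cC => <-.
Qed.

Lemma edges_count :
  #|HB_edges n k| = \sum_(X : {set sgnelt n} | inV1 k X) #|[set Y | HB_adj1 k X Y]|.
Proof.
pose Pairs := [set p : {set sgnelt n} * {set sgnelt n} | HB_adj1 k p.1 p.2].
pose f := fun p : {set sgnelt n} * {set sgnelt n} => [set p.1; p.2].
have finj : {in Pairs &, injective f}.
  move=> [X1 Y1] [X2 Y2]; rewrite !inE /HB_adj1 /= => /and3P [a1 b1 _] /and3P [a2 b2 _] E.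
  have h1 : X1 \in [set X2; Y2] by rewrite -[[set X2; Y2]]/(f (X2, Y2)) -E /f /= !inE eqxx.
  have h2 : Y1 \in [set X2; Y2] by rewrite -[[set X2; Y2]]/(f (X2, Y2)) -E /f /= !inE eqxx orbT.
  move: b1 b2 h1 h2; rewrite /inV2 !inE => /andP [_ b1] /andP [_ b2].
  case/orP => /eqP e1; case/orP => /eqP e2.
  - by move: b1; rewrite e2 a2.
  - by rewrite e1 e2.
  - by move: b2; rewrite -e1 a1.
  - by move: b2; rewrite -e1 a1.
have -> : HB_edges n k = f @: Pairs.
  apply/setP => e; rewrite inE; apply/existsP/imsetP.
    case => X /existsP [Y /and4P [XV YV /orP [a | a] /eqP ->]].
      by exists (X, Y); rewrite ?inE.
    by exists (Y, X); rewrite ?inE // /f /= setUC.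
  case => [[X Y]]; rewrite inE /= => a ->; exists X; apply/existsP; exists Y.
  move: (a); rewrite /HB_adj1 => /and3P [a1 a2 _].
  by rewrite !inE a1 a2 orbT /HB_adj a /= eqxx.
rewrite card_in_imset //.
rewrite (eq_bigr (fun X => \sum_(Y | HB_adj1 k X Y) 1)); last first.
  by move=> X _; rewrite -sum1_card; apply: eq_bigl => Y; rewrite inE.
rewrite pair_big_dep /= -sum1_card; apply: eq_bigl => [[X Y]] /=.
by rewrite inE /=; case/boolP: (HB_adj1 k X Y) => /= [a|_]; rewrite ?andbF // andbT; case/and3P: a.
Qed.

End Main.

Lemma sum_w N : \sum_(s < N.+1) 'C(N, s) * w s = \sum_(1 <= s < N.+1) 2 ^ (s - 1) * 'C(N, s).
Proof.
rewrite -(big_mkord predT (fun s => 'C(N, s) * w s)) (@big_ltn _ _ _ 0) // /w /= muln0 add0n.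
by apply: eq_big_nat => s /andP [s1 _]; rewrite -lt0n s1 mulnC.
Qed.

Lemma sum_w2 N k : 0 < k ->
  \sum_(t < N.+1) 'C(N, t) * (if (t : nat) != 0 then w (k + t) else 0) =
  \sum_(1 <= t < N.+1) 2 ^ (k + t - 1) * 'C(N, t).
Proof.
move=> hk.
rewrite -(big_mkord predT (fun t => 'C(N, t) * (if t != 0 then w (k + t) else 0))).
rewrite (@big_ltn _ _ _ 0) // /= muln0 add0n.
apply: eq_big_nat => s /andP [s1 _]; rewrite -lt0n s1 /w mulnC.
by rewrite addn_eq0 (negbTE (lt0n_neq0 hk)).
Qed.

Lemma card_Pos n : #|Pos n| = n.
Proof.
have -> : Pos n = [set (i, true) | i : 'I_n].
  apply/setP => [[i b]]; rewrite !inE /inBnplus /=.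
  apply/idP/imsetP => [-> | [j _ [_ ->]] //]; by exists i.
by rewrite card_imset ?card_ord // => i j [].
Qed.

Lemma card_V1 n k : #|[pred X : {set sgnelt n} | inV1 k X]| = 'C(n, k).
Proof.
rewrite -[in RHS](card_Pos n) -cards_draws; apply: eq_card => X.
by rewrite !inE.
Qed.

Lemma exists_comp n k (D : {set 'I_n}) : k <= n ->
  exists A : {set 'I_n}, #|A| = k /\ ((A \subset D) || (D \subset A)).
Proof.
move=> hkn; case: (leqP k #|D|) => h.
  have : 0 < #|[set A : {set 'I_n} | A \subset D & #|A| == k]| by rewrite cards_draws bin_gt0.
  case/card_gt0P => A; rewrite inE => /andP [sA /eqP cA].
  by exists A; rewrite cA sA.
have cC : #|~: D| = n - #|D|.
  have E := cardsC D; rewrite [X in _ = X]card_ord in E; lia.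
have : 0 < #|[set B : {set 'I_n} | B \subset ~: D & #|B| == k - #|D|]|.
  rewrite cards_draws bin_gt0 cC; lia.
case/card_gt0P => B; rewrite inE => /andP [sB /eqP cB].
exists (D :|: B); rewrite subsetUl orbT; split => //.
rewrite cardsU cB.
suff -> : D :&: B = set0 by rewrite cards0 subn0; lia.
apply/setP => y; rewrite !inE; apply/negP => /andP [yD yB].
by have := subsetP sB y yB; rewrite inE yD.
Qed.

Lemma connected_HB n k : 2 <= n -> 0 < k -> k < n ->
  graph_connected (HB_vert n k) (@HB_adj n k).
Proof.
move=> hn hk hkn u v uV vV.
set e := [rel x y | _].
have esym : symmetric e.
  move=> x y; rewrite /e /= /HB_adj.
  by case: (x \in HB_vert n k); case: (y \in HB_vert n k); rewrite //= orbC.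
pose F := Pos n.
have V1nF : inV1 n F by rewrite /inV1 /F subxx card_Pos eqxx.
have FV2 : inV2 k F.
  rewrite /inV2 (@V1_phi n n _ F V1nF); last by lia.
  by rewrite /inV1 card_Pos; apply/negP => /andP [_ /eqP]; lia.
have dF : dagger F = setT.
  apply/setP => i; rewrite inE; apply/imsetP; exists (i, true) => //.
  by rewrite /F inE.
have FV : F \in HB_vert n k by rewrite inE FV2 orbT.
have V1edge : forall X, inV1 k X -> e X F.
  move=> X V1X; rewrite /e /= FV inE V1X /= /HB_adj /HB_adj1 V1X FV2 dF.
  by rewrite subsetT.
have key : forall x, x \in HB_vert n k -> connect e x F.
  move=> x; rewrite inE; case V1x: (inV1 k x) => /= xV.
    by apply: connect1; apply: V1edge.
  have [A [cA cmp]] := @exists_comp n k (dagger x) (ltnW hkn).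
  pose X := [set (i, true) | i in A].
  have sX : X \subset Pos n.
    by apply/subsetP => a /imsetP [i _ ->]; rewrite inE.
  have dX : dagger X = A by rewrite /dagger /X -imset_comp imset_id.
  have V1X : inV1 k X.
    by rewrite /inV1 sX /= -(@dagger_card n X sX) dX cA.
  have exX : e x X.
    rewrite /e /= !inE V1X V1x xV /= /HB_adj.
    apply/orP; right; rewrite /HB_adj1 V1X xV dX /=.
    exact: cmp.
  apply: (@connect_trans _ _ X); apply: connect1; [exact: exX | exact: V1edge].
have c2 : connect e F v by rewrite (sym_connect_sym esym); exact: key.
exact: connect_trans (key u uV) c2.
Qed.

Lemma sumZ (r : seq nat) (F : nat -> nat) :
  (\sum_(i <- r) (F i)%:Z = (\sum_(i <- r) F i)%N%:Z)%R.
Proof.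
elim: r => [|a r IH]; first by rewrite !big_nil.
by rewrite !big_cons IH PoszD.
Qed.

Theorem mainTheorem9 (n k : nat) (hn : 2 <= n) (hk1 : 1 <= k) (hkn : k < n) :
  graph_connected (HB_vert n k) (@HB_adj n k) /\
  HB_circuit_rank n k =
  ('C(n, k)%:Z *
     (\sum_(1 <= s < k.+1) (2 ^ (s - 1) * 'C(k, s))%:Z - 1
      + \sum_(1 <= t < (n - k).+1) (2 ^ (k + t - 1) * 'C(n - k, t))%:Z)
   - \sum_(1 <= i < n.+1) (2 ^ (i - 1) * 'C(n, i))%:Z + 1)%R.
Proof.
split; first exact: connected_HB.
have hk : 0 < k by [].
rewrite !sumZ.
set Sub := \sum_(1 <= s < k.+1) 2 ^ (s - 1) * 'C(k, s).
set Sup := \sum_(1 <= t < (n - k).+1) 2 ^ (k + t - 1) * 'C(n - k, t).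
set Vs := \sum_(1 <= i < n.+1) 2 ^ (i - 1) * 'C(n, i).
have cE : #|HB_edges n k| = 'C(n, k) * (Sub + Sup - 1).
  rewrite edges_count (eq_bigr (fun _ => Sub + Sup - 1)).
    rewrite (eq_bigl (fun X => X \in [pred X : {set sgnelt n} | inV1 k X])) //.
    by rewrite sum_nat_const card_V1.
  move=> X V1X; rewrite (@adj_count n k hk X V1X) phi_count (@sum_PX n k hk X V1X) sum_w sum_w2 //.
have cV : #|HB_vert n k| = Vs.
  rewrite (@vert_eq n k hk).
  rewrite (_ : [set S | inPhi S] = [set S | inPhi S & predT (dagger S)]); last first.
    by apply/setP => S; rewrite !inE andbT.
  rewrite phi_count (eq_bigl (fun A : {set 'I_n} => A \subset setT)); last first.
    by move=> A; rewrite subsetT.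
  rewrite sum_subsets cardsT card_ord sum_w //.
have Sub1 : 1 <= Sub.
  rewrite /Sub (@big_ltn _ _ _ 1 k.+1); last by rewrite ltnS.
  rewrite expn0 mul1n bin1; lia.
have SS : 1 <= Sub + Sup by lia.
rewrite /HB_circuit_rank cE cV PoszM -(subzn SS).
rewrite PoszD.
ring.
Qed.
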